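(* Let $\alpha\in(0,1)$ be irrational with $\alpha=[0;a_1,a_2,\dots]$, and set $a_0=0$. For every $n\ge1$ define a finite block $B_n$ of integers as follows. (1) If $a_n\ge3$: $B_n=(q_{n-2}+q_{n-1},\;2q_{n-1},\;q_n-q_{n-1})$. (2) If $a_n=2$: $B_n=(q_n-q_{n-1})$. (3) If $a_{n-1}\ne1$, $a_n=1$, $a_{n+1}\ge2$: $B_n=(2q_{n-2}+q_{n-1})$ (note $2q_{n-2}+q_{n-1}=q_{n-2}+q_n$). (4) If $r\ge2$ and $a_{n-1}\ne1$, $a_n=a_{n+1}=\dots=a_{n+r-1}=1$, $a_{n+r}\ge2$: the $r$ indices $n,\dots,n+r-1$ of this maximal run of ones together are given the block $(2q_{n-2}+q_{n-1},\;2q_{n-1},\;2q_n,\;\dots,\;2q_{n+r-2},\;2q_{n+r-3}+q_{n+r-2})$. (5) If $a_{n-1}\ne1$ and $a_j=1$ for all $j\ge n$: the indices $j\ge n$ together are given the infinite block $(2q_{n-2}+q_{n-1},\;2q_{n-1},\;2q_n,\;2q_{n+1},\;\dots)$. Then the sequence $\mathfrak Q$ is obtained from the sequence $(a_1,a_2,a_3,\dots)$ by replacing each partial quotient (respectively each maximal run of ones) by the corresponding block and concatenating the blocks in order of increasing index; more precisely, this concatenation, after deleting repeated values, is exactly the increasing enumeration $\mathfrak q_1=1<\mathfrak q_2<\mathfrak q_3<\cdots$ of $\mathfrak Q$.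
   Context: Let $\alpha$ be an irrational real number in $(0,1)$ with continued fraction expansion $\alpha=[0;a_1,a_2,\dots]$ (the $a_i$ positive integers). Convergents: $p_n/q_n=[0;a_1,\dots,a_n]$ for $n\ge1$, with $p_{-1}=1,q_{-1}=0,p_0=0,q_0=1$, so that $q_n=a_nq_{n-1}+q_{n-2}$ and $p_n=a_np_{n-1}+p_{n-2}$. For real $t\ge1$ define $\psi^{[2]}_\alpha(t)=\min\{|q\alpha-p| : p,q\in\mathbb Z,\ 1\le q\le t,\ (p,q)\ne(p_n,q_n)\text{ for all }n\ge0\}$. Let $\mathfrak Q$ be the set consisting of $1$ together with all integers $t\ge2$ such that $\psi^{[2]}_\alpha(t)<\psi^{[2]}_\alpha(t-1)$ (the points of discontinuity of $\psi^{[2]}_\alpha$), enumerated increasingly as $\mathfrak q_1=1<\mathfrak q_2<\cdots$. *)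

(* Defs.v *)
From Stdlib Require Import Reals ZArith Arith List.
Import ListNotations.
Open Scope R_scope.

(* Shifted denominators/numerators of convergents:
   qs a k = q_{k-1}, ps a k = p_{k-1}  (so q_{-1}=0, q_0=1, p_{-1}=1, p_0=0),
   with q_n = a_n q_{n-1} + q_{n-2}, p_n = a_n p_{n-1} + p_{n-2}. *)
Fixpoint qs (a : nat -> nat) (k : nat) : nat :=
  match k with
  | O => 0%nat
  | S k' => match k' with
            | O => 1%nat
            | S k'' => (a k' * qs a k' + qs a k'')%nat
            end
  end.

Fixpoint ps (a : nat -> nat) (k : nat) : nat :=
  match k with
  | O => 1%nat
  | S k' => match k' with
            | O => 0%nat
            | S k'' => (a k' * ps a k' + ps a k'')%nat
            end
  end.

Definition qn (a : nat -> nat) (n : nat) : nat := qs a (S n).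
Definition pn (a : nat -> nat) (n : nat) : nat := ps a (S n).

Definition irrational (x : R) : Prop :=
  forall p q : Z, q <> 0%Z -> x * IZR q <> IZR p.

Definition admissible (a : nat -> nat) (t : nat) (p q : Z) : Prop :=
  (1 <= q)%Z /\ (q <= Z.of_nat t)%Z /\
  forall n : nat, ~ (p = Z.of_nat (pn a n) /\ q = Z.of_nat (qn a n)).

Definition psi2 (alpha : R) (a : nat -> nat) (t : nat) (v : R) : Prop :=
  (exists p q : Z, admissible a t p q /\ v = Rabs (IZR q * alpha - IZR p)) /\
  (forall p q : Z, admissible a t p q -> v <= Rabs (IZR q * alpha - IZR p)).

Definition inQ (alpha : R) (a : nat -> nat) (t : nat) : Prop :=
  t = 1%nat \/
  ((2 <= t)%nat /\ exists v w : R,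
     psi2 alpha a t v /\ psi2 alpha a (t - 1) w /\ v < w).

(* The block contributed by index n >= 1.  In terms of qs:
   q_{n-2} = qs a (n-1), q_{n-1} = qs a n, q_n = qs a (n+1).
   A maximal run of ones a_n = ... = a_{n+r-1} = 1 (a_{n-1} <> 1) has block
   (2q_{n-2}+q_{n-1}, 2q_{n-1}, 2q_n, ..., 2q_{n+r-2}, 2q_{n+r-3}+q_{n+r-2})
   (or its infinite analogue); it is split here over the indices of the run:
   index j of the run contributes 2q_{j-1}, preceded by 2q_{j-2}+q_{j-1} if j
   starts the run, followed by 2q_{j-2}+q_{j-1} if j ends the run; when the
   run has length one (case (3)) the single entry 2q_{n-2}+q_{n-1} is used.
   Concatenating these pieces gives exactly the run's block. *)
Definition block (a : nat -> nat) (n : nat) : list nat :=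
  if (3 <=? a n)%nat then
    [ (qs a (n - 1) + qs a n)%nat ; (2 * qs a n)%nat ; (qs a (S n) - qs a n)%nat ]
  else if (a n =? 2)%nat then
    [ (qs a (S n) - qs a n)%nat ]
  else
    let start := negb (a (n - 1) =? 1)%nat in
    let stop  := negb (a (S n) =? 1)%nat in
    match start, stop with
    | true, true   => [ (2 * qs a (n - 1) + qs a n)%nat ]
    | true, false  => [ (2 * qs a (n - 1) + qs a n)%nat ; (2 * qs a n)%nat ]
    | false, false => [ (2 * qs a n)%nat ]
    | false, true  => [ (2 * qs a n)%nat ; (2 * qs a (n - 1) + qs a n)%nat ]
    end.

(* k-th entry (0-based) of the concatenation B_1 B_2 B_3 ... ; every block is
   nonempty so the first k+1 blocks already contain position k. *)
Definition Qseq (a : nat -> nat) (k : nat) : nat :=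
  nth k (flat_map (block a) (seq 1 (S k))) 0%nat.

(* Main.v *)
Require Import Defs.
From Stdlib Require Import Reals ZArith Arith List Lra Lia Psatz.
Import ListNotations.
Open Scope R_scope.

Section S1.
Variable a : nat -> nat.
Variable alpha : R.

Definition Q (k : nat) : Z := Z.of_nat (qs a k).
Definition P (k : nat) : Z := Z.of_nat (ps a k).
Definition A (k : nat) : Z := Z.of_nat (a k).

Lemma Q_rec k : Q (S (S k)) = (A (S k) * Q (S k) + Q k)%Z.
Proof. unfold Q, A. simpl qs. lia. Qed.
Lemma P_rec k : P (S (S k)) = (A (S k) * P (S k) + P k)%Z.
Proof. unfold P, A. simpl ps. lia. Qed.
Lemma Q0 : Q 0 = 0%Z. Proof. reflexivity. Qed.
Lemma Q1 : Q 1 = 1%Z. Proof. reflexivity. Qed.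
Lemma P0 : P 0 = 1%Z. Proof. reflexivity. Qed.
Lemma P1 : P 1 = 0%Z. Proof. reflexivity. Qed.
Lemma Q_nonneg k : (0 <= Q k)%Z. Proof. unfold Q; lia. Qed.
Lemma A_nonneg k : (0 <= A k)%Z. Proof. unfold A; lia. Qed.

Fixpoint sg (k : nat) : Z := match k with O => (-1)%Z | S k' => (- sg k')%Z end.
Lemma sg_sq k : (sg k * sg k = 1)%Z.
Proof. induction k; simpl; lia. Qed.

Lemma det k : (P (S k) * Q k - P k * Q (S k) = sg k)%Z.
Proof.
  induction k. { reflexivity. }
  simpl sg. rewrite Q_rec, P_rec. rewrite <- IHk. ring.
Qed.

Definition E (k : nat) : R := IZR (Q k) * alpha - IZR (P k).
Lemma E_rec k : E (S (S k)) = IZR (A (S k)) * E (S k) + E k.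
Proof. unfold E. rewrite Q_rec, P_rec, !plus_IZR, !mult_IZR. ring. Qed.

Definition delta (k : nat) : R := IZR (sg k) * E k.

Lemma E_of_delta k : E k = IZR (sg k) * delta k.
Proof. unfold delta. rewrite <- Rmult_assoc, <- mult_IZR, sg_sq. simpl. ring. Qed.

Lemma delta_rec k : delta k = IZR (A (S k)) * delta (S k) + delta (S (S k)).
Proof.
  unfold delta. rewrite E_rec. simpl sg. rewrite !opp_IZR. ring.
Qed.

Lemma delta0 : delta 0 = 1. Proof. unfold delta, E. simpl. rewrite Q0, P0. simpl. ring. Qed.
Lemma delta1 : delta 1 = alpha. Proof. unfold delta, E. simpl. rewrite Q1, P1. simpl. ring. Qed.

Lemma basis c p q : exists x y : Z,
  p = (x * P c + y * P (S c))%Z /\ q = (x * Q c + y * Q (S c))%Z.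
Proof.
  set (D := sg c).
  exists (D * (q * P (S c) - p * Q (S c)))%Z, (D * (p * Q c - q * P c))%Z.
  pose proof (det c) as Hd. pose proof (sg_sq c) as Hs. fold D in Hd, Hs.
  split.
  - transitivity (D * (P (S c) * Q c - P c * Q (S c)) * p)%Z.
    + rewrite Hd, Hs. ring.
    + ring.
  - transitivity (D * (P (S c) * Q c - P c * Q (S c)) * q)%Z.
    + rewrite Hd, Hs. ring.
    + ring.
Qed.

Lemma basis_zero c x y :
  (x * P c + y * P (S c) = 0)%Z -> (x * Q c + y * Q (S c) = 0)%Z -> x = 0%Z /\ y = 0%Z.
Proof.
  intros H1 H2. pose proof (det c) as Hd. pose proof (sg_sq c) as Hs.
  split.
  - assert (x = sg c * (P (S c) * Q c - P c * Q (S c)) * x)%Z by (rewrite Hd, Hs; ring).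
    rewrite H. replace (sg c * (P (S c) * Q c - P c * Q (S c)) * x)%Z
      with (sg c * (P (S c) * (x * Q c + y * Q (S c)) - Q (S c) * (x * P c + y * P (S c))))%Z by ring.
    rewrite H1, H2. ring.
  - assert (y = sg c * (P (S c) * Q c - P c * Q (S c)) * y)%Z by (rewrite Hd, Hs; ring).
    rewrite H. replace (sg c * (P (S c) * Q c - P c * Q (S c)) * y)%Z
      with (sg c * (Q c * (x * P c + y * P (S c)) - P c * (x * Q c + y * Q (S c))))%Z by ring.
    rewrite H1, H2. ring.
Qed.

Lemma value_formula c p q x y :
  p = (x * P c + y * P (S c))%Z -> q = (x * Q c + y * Q (S c))%Z ->
  Rabs (IZR q * alpha - IZR p) = Rabs (IZR x * delta c - IZR y * delta (S c)).
Proof.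
  intros -> ->.
  replace (IZR (x * Q c + y * Q (S c)) * alpha - IZR (x * P c + y * P (S c)))
    with (IZR x * E c + IZR y * E (S c)).
  2:{ unfold E. rewrite !plus_IZR, !mult_IZR. ring. }
  rewrite !E_of_delta. simpl sg. rewrite opp_IZR.
  replace (IZR x * (IZR (sg c) * delta c) + IZR y * (- IZR (sg c) * delta (S c)))
    with (IZR (sg c) * (IZR x * delta c - IZR y * delta (S c))) by ring.
  rewrite Rabs_mult.
  assert (Rabs (IZR (sg c)) = 1).
  { pose proof (sg_sq c). assert (sg c = 1 \/ sg c = -1)%Z by nia.
    destruct H0 as [-> | ->]; [rewrite Rabs_R1; reflexivity|].
    rewrite Rabs_left; [ring| lra]. }
  rewrite H. ring.
Qed.

End S1.

Lemma lim_nonneg (u : nat -> R) l c d N :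
  Un_cv u l -> (forall m, (N <= m)%nat -> 0 <= c * u m + d) -> 0 <= c * l + d.
Proof.
  intros Hu Hm.
  destruct (Rle_or_lt 0 (c * l + d)) as [H|H]; [exact H|exfalso].
  destruct (Req_dec c 0) as [Hc|Hc].
  { specialize (Hm N (le_n _)). subst c. lra. }
  assert (Hca : 0 < Rabs c) by (apply Rabs_pos_lt; exact Hc).
  destruct (Hu (- (c * l + d) / Rabs c)) as [N0 HN0].
  { apply Rdiv_lt_0_compat; lra. }
  specialize (HN0 (max N N0) (Nat.le_max_r _ _)).
  specialize (Hm (max N N0) (Nat.le_max_l _ _)).
  unfold R_dist in HN0.
  set (m := max N N0) in *.
  assert (Rabs (c * (u m - l)) < - (c * l + d)).
  { rewrite Rabs_mult.
    apply Rmult_lt_compat_l with (r := Rabs c) in HN0; [|lra].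
    replace (Rabs c * (- (c * l + d) / Rabs c)) with (- (c * l + d)) in HN0 by (field; lra).
    lra. }
  pose proof (Rle_abs (c * (u m - l))).
  lra.
Qed.

Section S2.
Variable a : nat -> nat.
Variable alpha : R.
Hypothesis Halpha : 0 < alpha < 1.
Hypothesis Hirr : irrational alpha.
Hypothesis Ha0 : a 0%nat = 0%nat.
Hypothesis Hapos : forall n : nat, (1 <= n)%nat -> (1 <= a n)%nat.
Hypothesis Hcf : Un_cv (fun n => INR (pn a n) / INR (qn a n)) alpha.

Lemma A_pos n : (1 <= n)%nat -> (1 <= A a n)%Z.
Proof. intros. unfold A. specialize (Hapos n H). lia. Qed.

Lemma Q_pos_aux k : (Q a (S k) >= 1 /\ Q a (S (S k)) >= Q a (S k))%Z.
Proof.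
  induction k.
  - rewrite Q_rec, Q1, Q0. pose proof (A_pos 1). lia.
  - destruct IHk. split; [lia|]. rewrite (Q_rec a (S k)).
    pose proof (A_pos (S (S k))). pose proof (Q_nonneg a (S k)). nia.
Qed.

Lemma Q_pos k : (1 <= k)%nat -> (1 <= Q a k)%Z.
Proof. intros. destruct k; [lia|]. pose proof (Q_pos_aux k). lia. Qed.

Lemma Q_mono k : (Q a k <= Q a (S k))%Z.
Proof. destruct k. { rewrite Q0, Q1. lia. } pose proof (Q_pos_aux k). lia. Qed.

Lemma Q_strict k : (1 <= k)%nat -> (Q a k < Q a (S (S k)))%Z.
Proof.
  intros. rewrite Q_rec. pose proof (Q_pos k H). pose proof (A_pos (S k)).
  pose proof (Q_pos (S k)). nia.
Qed.

Lemma Q_lin k : (Z.of_nat k - 1 <= Q a k)%Z.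
Proof.
  assert (forall k, (Z.of_nat k - 1 <= Q a k /\ Z.of_nat k <= Q a (S k))%Z).
  { induction k0.
    - rewrite Q0, Q1. simpl. lia.
    - destruct IHk0. split; [lia|]. rewrite Q_rec. pose proof (A_pos (S k0)).
      pose proof (Q_nonneg a (S k0)).
      destruct k0.
      + rewrite Q1, Q0. lia.
      + pose proof (Q_pos (S k0)). nia. }
  apply H.
Qed.

Definition Dl (k m : nat) : Z := (Q a k * P a m - P a k * Q a m)%Z.

Lemma Dl_sign k d : (sg k * Dl k (k + d) >= 0 /\ sg k * Dl k (S (k + d)) >= 1)%Z.
Proof.
  induction d.
  - unfold Dl. rewrite Nat.add_0_r. pose proof (det a k). pose proof (sg_sq k). split; nia.
  - destruct IHd as [H1 H2]. split.
    + rewrite <- plus_n_Sm. lia.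
    + rewrite <- plus_n_Sm. unfold Dl in *.
      rewrite Q_rec, P_rec.
      pose proof (A_pos (S (k + d))).
      replace (sg k * (Q a k * (A a (S (k + d)) * P a (S (k + d)) + P a (k + d)) -
        P a k * (A a (S (k + d)) * Q a (S (k + d)) + Q a (k + d))))%Z
      with (A a (S (k + d)) * (sg k * (Q a k * P a (S (k + d)) - P a k * Q a (S (k + d))))
         + sg k * (Q a k * P a (k + d) - P a k * Q a (k + d)))%Z by ring.
      nia.
Qed.

Lemma E_sign_weak k : 0 <= IZR (sg k) * E a alpha k.
Proof.
  unfold E.
  replace (IZR (sg k) * (IZR (Q a k) * alpha - IZR (P a k)))
    with ((IZR (sg k) * IZR (Q a k)) * alpha + (- IZR (sg k) * IZR (P a k))) by ring.
  apply (lim_nonneg _ _ _ _ k Hcf).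
  intros m Hm.
  unfold pn, qn. rewrite !INR_IZR_INZ. fold (P a (S m)). fold (Q a (S m)).
  pose proof (Q_pos (S m) ltac:(lia)) as HQ.
  assert (HQr : 0 < IZR (Q a (S m))) by (apply IZR_lt; lia).
  replace (IZR (sg k) * IZR (Q a k) * (IZR (P a (S m)) / IZR (Q a (S m))) +
      - IZR (sg k) * IZR (P a k))
    with (IZR (sg k * Dl k (S m)) / IZR (Q a (S m))).
  2:{ unfold Dl. rewrite !mult_IZR, minus_IZR, !mult_IZR. field. lra. }
  unfold Rdiv; apply Rle_mult_inv_pos; [|exact HQr].
  apply IZR_le.
  destruct (Dl_sign k (m - k)) as [_ H2].
  replace (S (k + (m - k))) with (S m) in H2 by lia. lia.
Qed.

Lemma E_nonzero k : E a alpha k <> 0.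
Proof.
  destruct k.
  { unfold E. rewrite Q0, P0. simpl. lra. }
  intro H. unfold E in H. apply (Hirr (P a (S k)) (Q a (S k))).
  - pose proof (Q_pos (S k)). lia.
  - lra.
Qed.

Lemma delta_pos k : 0 < delta a alpha k.
Proof.
  unfold delta. pose proof (E_sign_weak k). pose proof (E_nonzero k).
  destruct (Rle_lt_or_eq_dec _ _ H); [exact r|].
  exfalso. apply H0. pose proof (sg_sq k).
  assert (IZR (sg k) <> 0) by (apply not_0_IZR; lia).
  symmetry in e. apply Rmult_integral in e. destruct e as [e|e]; [exfalso; exact (H2 e)|exact e].
Qed.

Lemma delta_dec k : delta a alpha (S k) < delta a alpha k.
Proof.
  rewrite (delta_rec a alpha k). pose proof (A_pos (S k)).
  pose proof (delta_pos (S k)). pose proof (delta_pos (S (S k))).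
  assert (1 <= IZR (A a (S k))) by (apply IZR_le; lia). nra.
Qed.

End S2.

Lemma lin (X Y m n : Z) d0 d1 : 0 < d1 -> d1 < d0 -> (m <= X)%Z -> (m + n <= X + Y)%Z ->
  IZR m * d0 + IZR n * d1 <= IZR X * d0 + IZR Y * d1.
Proof.
  intros H0 H1 H2 H3.
  apply IZR_le in H2. apply IZR_le in H3. rewrite !plus_IZR in H3.
  assert (0 <= (IZR X - IZR m) * (d0 - d1)) by (apply Rmult_le_pos; lra).
  assert (0 <= (IZR X + IZR Y - IZR m - IZR n) * d1) by (apply Rmult_le_pos; lra).
  nra.
Qed.

Section S3.
Variable a : nat -> nat.
Variable alpha : R.
Hypothesis Halpha : 0 < alpha < 1.
Hypothesis Hirr : irrational alpha.
Hypothesis Ha0 : a 0%nat = 0%nat.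
Hypothesis Hapos : forall n : nat, (1 <= n)%nat -> (1 <= a n)%nat.
Hypothesis Hcf : Un_cv (fun n => INR (pn a n) / INR (qn a n)) alpha.

Notation Q := (Q a).
Notation P := (P a).
Notation A := (A a).
Notation d := (delta a alpha).

Lemma dpos k : 0 < d k. Proof. eapply delta_pos; eauto. Qed.
Lemma ddec k : d (S k) < d k. Proof. eapply delta_dec; eauto. Qed.
Lemma Apos n : (1 <= n)%nat -> (1 <= A n)%Z. Proof. intros; eapply A_pos; eauto. Qed.
Lemma Qpos k : (1 <= k)%nat -> (1 <= Q k)%Z. Proof. intros; eapply Q_pos; eauto. Qed.
Lemma Qmono k : (Q k <= Q (S k))%Z. Proof. eapply Q_mono; eauto. Qed.

Definition NC (p q : Z) : Prop :=
  forall n : nat, ~ (p = Z.of_nat (pn a n) /\ q = Z.of_nat (qn a n)).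

Definition val (p q : Z) : R := Rabs (IZR q * alpha - IZR p).

Lemma NC_not p q j : NC p q -> (1 <= q)%Z -> p = P j -> q = Q j -> False.
Proof.
  intros H Hq Hp Hqq. destruct j.
  - rewrite Q0 in Hqq. lia.
  - apply (H j). split; assumption.
Qed.

Definition LBP (B : Z) (w : R) : Prop :=
  forall p q, NC p q -> (1 <= q)%Z -> (q < B)%Z -> w <= val p q.

Lemma LB_reduce c B w : (1 <= c)%nat -> (B <= Q c + Q (S c))%Z ->
  (forall x y : Z,
     (1 <= x * Q c + y * Q (S c))%Z -> (x * Q c + y * Q (S c) < B)%Z ->
     NC (x * P c + y * P (S c)) (x * Q c + y * Q (S c)) ->
     ((0 <= x /\ y <= 0) \/ (x <= 0 /\ 0 <= y))%Z ->
     w <= IZR (Z.abs x) * d c + IZR (Z.abs y) * d (S c)) ->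
  LBP B w.
Proof.
  intros Hc HB H p q Hnc Hq1 HqB.
  destruct (basis a c p q) as (x & y & Hp & Hq).
  unfold val. rewrite (value_formula a alpha c p q x y Hp Hq).
  pose proof (Qpos c Hc). pose proof (Qpos (S c) ltac:(lia)).
  subst p q.
  assert (Hs : ((0 <= x /\ y <= 0) \/ (x <= 0 /\ 0 <= y))%Z).
  { destruct (Z_le_gt_dec 1 x), (Z_le_gt_dec 1 y).
    - exfalso. nia.
    - lia.
    - lia.
    - exfalso. nia. }
  specialize (H x y Hq1 HqB Hnc Hs).
  pose proof (dpos c). pose proof (dpos (S c)).
  destruct Hs as [[Hx1 Hy1]|[Hx1 Hy1]].
  - rewrite Z.abs_eq in H by lia. rewrite Z.abs_neq in H by lia.
    rewrite opp_IZR in H.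
    rewrite Rabs_right.
    + lra.
    + apply IZR_le in Hx1. apply IZR_le in Hy1. nra.
  - rewrite Z.abs_neq in H by lia. rewrite Z.abs_eq in H by lia.
    rewrite opp_IZR in H.
    rewrite Rabs_left1.
    + lra.
    + apply IZR_le in Hx1. apply IZR_le in Hy1. nra.
Qed.

Lemma ex_Vc c x y : (1 <= x * Q c + y * Q (S c))%Z ->
  NC (x * P c + y * P (S c)) (x * Q c + y * Q (S c)) -> x = 1%Z -> y = 0%Z -> False.
Proof. intros H1 H2 -> ->. apply (NC_not _ _ c H2 H1); ring. Qed.
Lemma ex_Vc1 c x y : (1 <= x * Q c + y * Q (S c))%Z ->
  NC (x * P c + y * P (S c)) (x * Q c + y * Q (S c)) -> x = 0%Z -> y = 1%Z -> False.
Proof. intros H1 H2 -> ->. apply (NC_not _ _ (S c) H2 H1); ring. Qed.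
Lemma ex_Vprev m x y : (1 <= x * Q (S m) + y * Q (S (S m)))%Z ->
  NC (x * P (S m) + y * P (S (S m))) (x * Q (S m) + y * Q (S (S m))) ->
  x = (- A (S m))%Z -> y = 1%Z -> False.
Proof.
  intros H1 H2 -> ->. apply (NC_not _ _ m H2 H1).
  - rewrite P_rec; ring.
  - rewrite Q_rec; ring.
Qed.

Ltac Rprep := repeat match goal with
  | |- context [IZR (Z.abs ?x)] =>
      first [ rewrite (Z.abs_eq x) by lia | rewrite (Z.abs_neq x) by lia ]
  end.

Lemma G1 c : (1 <= c)%nat -> LBP (Q c + Q (S c)) (d c + d (S c)).
Proof.
  intros Hc. apply (LB_reduce c); [exact Hc| lia|].
  intros x y Hq1 HqB Hnc Hs.
  pose proof (Qpos c Hc). pose proof (Qpos (S c) ltac:(lia)). pose proof (Qmono c).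
  pose proof (dpos (S c)). pose proof (ddec c).
  replace (d c + d (S c)) with (IZR 1 * d c + IZR 1 * d (S c)) by (simpl; ring).
  destruct (Z.eq_dec x 0) as [Hx|Hx].
  { subst x. destruct (Z.eq_dec y 1) as [Hy|Hy].
    - exfalso; exact (ex_Vc1 c _ _ Hq1 Hnc eq_refl Hy).
    - exfalso; nia. }
  destruct (Z.eq_dec y 0) as [Hy|Hy].
  { subst y. destruct (Z.eq_dec x 1) as [Hx1|Hx1].
    - exfalso; exact (ex_Vc c _ _ Hq1 Hnc Hx1 eq_refl).
    - apply lin; try lra; nia. }
  apply lin; try lra; lia.
Qed.

Ltac fin := apply lin; [apply dpos|apply ddec|lia|lia].

Lemma Qrec' m : Q (S (S m)) = (A (S m) * Q (S m) + Q m)%Z.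
Proof. apply Q_rec. Qed.

Lemma W1 m : (3 <= a (S m))%nat -> LBP (2 * Q (S m)) (d m - d (S m)).
Proof.
  intros Ha. set (c := S m).
  apply (LB_reduce c); [unfold c; lia| pose proof (Qmono c); lia|].
  intros x y Hq1 HqB Hnc Hs.
  assert (HA : (3 <= A c)%Z) by (unfold A, c; lia).
  pose proof (Qpos c ltac:(unfold c; lia)). pose proof (Qmono m).
  pose proof (Qrec' m) as HR. fold c in HR.
  pose proof (Q_nonneg a m).
  replace (d m - d c) with (IZR (A c - 1) * d c + IZR 1 * d (S c)).
  2:{ rewrite (delta_rec a alpha m). fold c. rewrite minus_IZR. simpl. ring. }
  try (repeat match goal with H : context [S m] |- _ => progress fold c in H end).
  destruct (Z.eq_dec x 0) as [Hx|Hx].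
  { subst x. exfalso. pose proof (Q_nonneg a (S c)).
    assert (y >= 1)%Z by nia. nia. }
  destruct (Z.eq_dec y 0) as [Hy|Hy].
  { subst y. destruct (Z.eq_dec x 1) as [Hx1|Hx1].
    - exfalso; exact (ex_Vc c _ _ Hq1 Hnc Hx1 eq_refl).
    - exfalso; nia. }
  destruct Hs as [[Hx1 Hy1]|[Hx1 Hy1]].
  - Rprep. assert (x >= A c + 1)%Z by nia. fin.
  - Rprep. assert (- x >= A c - 1)%Z by nia. fin.
Qed.

Lemma W2 m : (3 <= a (S m))%nat -> LBP (Q (S (S m)) - Q (S m)) (2 * d (S m)).
Proof.
  intros Ha. set (c := S m).
  apply (LB_reduce c); [unfold c; lia| pose proof (Qpos c ltac:(unfold c;lia)); lia|].
  intros x y Hq1 HqB Hnc Hs.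
  assert (HA : (3 <= A c)%Z) by (unfold A, c; lia).
  pose proof (Qpos c ltac:(unfold c; lia)). pose proof (Qmono m).
  pose proof (Qrec' m) as HR. fold c in HR.
  pose proof (Q_nonneg a m).
  replace (2 * d c) with (IZR 2 * d c + IZR 0 * d (S c)) by (simpl; ring).
  try (repeat match goal with H : context [S m] |- _ => progress fold c in H end).
  destruct (Z.eq_dec x 0) as [Hx|Hx].
  { subst x. pose proof (Q_nonneg a (S c)). assert (y >= 1)%Z by nia. exfalso. nia. }
  destruct (Z.eq_dec y 0) as [Hy|Hy].
  { subst y. assert (x >= 1)%Z by nia. destruct (Z.eq_dec x 1) as [Hx1|Hx1].
    - exfalso; exact (ex_Vc c _ _ Hq1 Hnc Hx1 eq_refl).
    - Rprep; try (exfalso; lia). assert (x >= 2)%Z by nia. fin. }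
  pose proof (Q_nonneg a (S c)); destruct Hs as [[Hx1 Hy1]|[Hx1 Hy1]]; [assert (Hyneg : (y <= -1)%Z) by lia; assert (Hyy: (y * Q (S c) <= - Q (S c))%Z) by nia | assert (Hxneg : (x <= -1)%Z) by lia; assert (Hxx: (x * Q c <= - Q c)%Z) by nia].
  - Rprep. assert (x >= A c + 1)%Z by nia. fin.
  - Rprep. assert (- x >= 2)%Z by nia. fin.
Qed.

Lemma W3 m : a (S m) = 1%nat -> a (S (S m)) = 1%nat ->
  LBP (2 * Q (S m)) (d m + d (S (S m))).
Proof.
  intros Ha Ha'. set (c := S m).
  apply (LB_reduce c); [unfold c; lia| pose proof (Qmono c); lia|].
  intros x y Hq1 HqB Hnc Hs.
  assert (HA : (A c = 1)%Z) by (unfold A, c; rewrite Ha; reflexivity).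
  pose proof (Qpos c ltac:(unfold c; lia)). pose proof (Qmono m).
  pose proof (Qrec' m) as HR. fold c in HR. rewrite HA in HR.
  pose proof (Q_nonneg a m).
  replace (d m + d (S c)) with (IZR 1 * d c + IZR 2 * d (S c)).
  2:{ rewrite (delta_rec a alpha m). fold c. rewrite HA. simpl. ring. }
  try (repeat match goal with H : context [S m] |- _ => progress fold c in H end).
  destruct (Z.eq_dec x 0) as [Hx|Hx].
  { subst x. pose proof (Q_nonneg a (S c)). assert (y >= 1)%Z by nia. destruct (Z.eq_dec y 1) as [Hy|Hy].
    - exfalso; exact (ex_Vc1 c 0 y Hq1 Hnc eq_refl Hy).
    - exfalso; nia. }
  destruct (Z.eq_dec y 0) as [Hy|Hy].
  { subst y. assert (x >= 1)%Z by nia. destruct (Z.eq_dec x 1) as [Hx1|Hx1].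
    - exfalso; exact (ex_Vc c _ _ Hq1 Hnc Hx1 eq_refl).
    - exfalso; nia. }
  pose proof (Q_nonneg a (S c)); destruct Hs as [[Hx1 Hy1]|[Hx1 Hy1]]; [assert (Hyneg : (y <= -1)%Z) by lia; assert (Hyy: (y * Q (S c) <= - Q (S c))%Z) by nia | assert (Hxneg : (x <= -1)%Z) by lia; assert (Hxx: (x * Q c <= - Q c)%Z) by nia].
  - Rprep. assert (x >= 2)%Z by nia. fin.
  - Rprep. destruct (Z.eq_dec y 1) as [Hy2|Hy2].
    + assert (x = -1)%Z by nia. exfalso.
      apply (ex_Vprev m x y Hq1 Hnc); [fold c; lia| exact Hy2].
    + fin.
Qed.

Lemma W4 m : a (S m) = 1%nat -> LBP (2 * Q m + Q (S m)) (2 * d (S m)).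
Proof.
  intros Ha. set (c := S m).
  pose proof (Qmono m). pose proof (Qrec' m) as HR. fold c in HR.
  assert (HA : (A c = 1)%Z) by (unfold A, c; rewrite Ha; reflexivity). rewrite HA in HR.
  try (repeat match goal with H : context [S m] |- _ => progress fold c in H end).
  apply (LB_reduce c); [unfold c; lia| lia|].
  intros x y Hq1 HqB Hnc Hs.
  pose proof (Qpos c ltac:(unfold c; lia)).
  pose proof (Q_nonneg a m).
  replace (2 * d c) with (IZR 2 * d c + IZR 0 * d (S c)) by (simpl; ring).
  try (repeat match goal with H : context [S m] |- _ => progress fold c in H end).
  destruct (Z.eq_dec x 0) as [Hx|Hx].
  { subst x. pose proof (Q_nonneg a (S c)). assert (y >= 1)%Z by nia. destruct (Z.eq_dec y 1) as [Hy|Hy].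
    - exfalso; exact (ex_Vc1 c 0 y Hq1 Hnc eq_refl Hy).
    - exfalso; nia. }
  destruct (Z.eq_dec y 0) as [Hy|Hy].
  { subst y. assert (x >= 1)%Z by nia. destruct (Z.eq_dec x 1) as [Hx1|Hx1].
    - exfalso; exact (ex_Vc c _ _ Hq1 Hnc Hx1 eq_refl).
    - Rprep; try (exfalso; lia). assert (x >= 2)%Z by nia. fin. }
  pose proof (Q_nonneg a (S c)); destruct Hs as [[Hx1 Hy1]|[Hx1 Hy1]]; [assert (Hyneg : (y <= -1)%Z) by lia; assert (Hyy: (y * Q (S c) <= - Q (S c))%Z) by nia | assert (Hxneg : (x <= -1)%Z) by lia; assert (Hxx: (x * Q c <= - Q c)%Z) by nia].
  - Rprep. assert (x >= 2)%Z by nia. fin.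
  - Rprep. destruct (Z.eq_dec x (-1)) as [Hx2|Hx2].
    + destruct (Z.eq_dec y 1) as [Hy2|Hy2].
      * exfalso. apply (ex_Vprev m x y Hq1 Hnc); [fold c; lia| exact Hy2].
      * exfalso. nia.
    + fin.
Qed.

Lemma ex_V2 m x y : A (S m) = 1%Z -> A (S (S m)) = 1%Z ->
  (1 <= x * Q (S (S m)) + y * Q (S (S (S m))))%Z ->
  NC (x * P (S (S m)) + y * P (S (S (S m)))) (x * Q (S (S m)) + y * Q (S (S (S m)))) ->
  x = 2%Z -> y = (-1)%Z -> False.
Proof.
  intros H1 H2 Hq Hn -> ->. apply (NC_not _ _ m Hn Hq).
  - rewrite (P_rec a (S m)), (P_rec a m), H1, H2. ring.
  - rewrite (Q_rec a (S m)), (Q_rec a m), H1, H2. ring.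
Qed.

Lemma W5 m : a (S m) = 1%nat -> a (S (S m)) = 1%nat ->
  LBP (2 * Q (S (S m))) (2 * d (S m)).
Proof.
  intros Ha Ha'. set (c := S (S m)).
  assert (HA : (A c = 1)%Z) by (unfold A, c; rewrite Ha'; reflexivity).
  assert (HA' : (A (S m) = 1)%Z) by (unfold A; rewrite Ha; reflexivity).
  pose proof (Qmono m). pose proof (Qmono (S m)). pose proof (Qmono c).
  pose proof (Qrec' m) as HR. rewrite HA' in HR.
  pose proof (Qrec' (S m)) as HR'. fold c in HR, HR'. rewrite HA in HR'.
  try (repeat match goal with H : context [S m] |- _ => progress fold c in H end).
  apply (LB_reduce c); [unfold c; lia| lia|].
  intros x y Hq1 HqB Hnc Hs.
  pose proof (Qpos c ltac:(unfold c; lia)).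
  pose proof (Q_nonneg a m).
  replace (2 * d (S m)) with (IZR 2 * d c + IZR 2 * d (S c)).
  2:{ rewrite (delta_rec a alpha (S m)). fold c. rewrite HA. simpl. ring. }
  try (repeat match goal with H : context [S m] |- _ => progress fold c in H end).
  destruct (Z.eq_dec x 0) as [Hx|Hx].
  { subst x. pose proof (Q_nonneg a (S c)). assert (y >= 1)%Z by nia. destruct (Z.eq_dec y 1) as [Hy|Hy].
    - exfalso; exact (ex_Vc1 c 0 y Hq1 Hnc eq_refl Hy).
    - exfalso; nia. }
  destruct (Z.eq_dec y 0) as [Hy|Hy].
  { subst y. assert (x >= 1)%Z by nia. destruct (Z.eq_dec x 1) as [Hx1|Hx1].
    - exfalso; exact (ex_Vc c _ _ Hq1 Hnc Hx1 eq_refl).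
    - exfalso; nia. }
  pose proof (Q_nonneg a (S c)); destruct Hs as [[Hx1 Hy1]|[Hx1 Hy1]]; [assert (Hyneg : (y <= -1)%Z) by lia; assert (Hyy: (y * Q (S c) <= - Q (S c))%Z) by nia | assert (Hxneg : (x <= -1)%Z) by lia; assert (Hxx: (x * Q c <= - Q c)%Z) by nia].
  - Rprep. assert (x >= 2)%Z by nia.
    destruct (Z.eq_dec x 2) as [Hx2|Hx2].
    + destruct (Z.eq_dec y (-1)) as [Hy2|Hy2].
      * exfalso. exact (ex_V2 m x y HA' HA Hq1 Hnc Hx2 Hy2).
      * exfalso. nia.
    + fin.
  - Rprep. destruct (Z.eq_dec y 1) as [Hy2|Hy2].
    + exfalso. assert (x = -1)%Z by nia.
      apply (ex_Vprev (S m) x y Hq1 Hnc); [fold c; lia| exact Hy2].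
    + destruct (Z.eq_dec x (-1)) as [Hx2|Hx2].
      * exfalso. nia.
      * fin.
Qed.

Lemma X3 m : (2 <= a (S m))%nat -> a (S (S m)) = 1%nat ->
  LBP (2 * Q (S m) + Q (S (S m))) (d (S m) + d (S (S m))).
Proof.
  intros Ha Ha'. set (c := S (S m)).
  assert (HA : (A c = 1)%Z) by (unfold A, c; rewrite Ha'; reflexivity).
  assert (HA' : (2 <= A (S m))%Z) by (unfold A; lia).
  pose proof (Qmono m). pose proof (Qmono (S m)). pose proof (Qmono c).
  pose proof (Qrec' m) as HR.
  pose proof (Qrec' (S m)) as HR'. fold c in HR, HR'. rewrite HA in HR'.
  pose proof (Qpos (S m) ltac:(lia)).
  pose proof (Q_nonneg a m).
  try (repeat match goal with H : context [S m] |- _ => progress fold c in H end).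
  apply (LB_reduce c); [unfold c; lia| nia|].
  intros x y Hq1 HqB Hnc Hs.
  replace (d (S m) + d c) with (IZR 2 * d c + IZR 1 * d (S c)).
  2:{ rewrite (delta_rec a alpha (S m)). fold c. rewrite HA. simpl. ring. }
  try (repeat match goal with H : context [S m] |- _ => progress fold c in H end).
  destruct (Z.eq_dec x 0) as [Hx|Hx].
  { subst x. pose proof (Q_nonneg a (S c)). assert (y >= 1)%Z by nia. destruct (Z.eq_dec y 1) as [Hy|Hy].
    - exfalso; exact (ex_Vc1 c 0 y Hq1 Hnc eq_refl Hy).
    - exfalso; nia. }
  destruct (Z.eq_dec y 0) as [Hy|Hy].
  { subst y. assert (x >= 1)%Z by nia. destruct (Z.eq_dec x 1) as [Hx1|Hx1].
    - exfalso; exact (ex_Vc c _ _ Hq1 Hnc Hx1 eq_refl).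
    - exfalso; nia. }
  pose proof (Q_nonneg a (S c)); destruct Hs as [[Hx1 Hy1]|[Hx1 Hy1]]; [assert (Hyneg : (y <= -1)%Z) by lia; assert (Hyy: (y * Q (S c) <= - Q (S c))%Z) by nia | assert (Hxneg : (x <= -1)%Z) by lia; assert (Hxx: (x * Q c <= - Q c)%Z) by nia].
  - Rprep. assert (x >= 2)%Z by nia. fin.
  - Rprep. destruct (Z.eq_dec x (-1)) as [Hx2|Hx2].
    + destruct (Z.eq_dec y 1) as [Hy2|Hy2].
      * exfalso. apply (ex_Vprev (S m) x y Hq1 Hnc); [fold c; lia| exact Hy2].
      * exfalso. nia.
    + fin.
Qed.

Lemma X4 m : a (S m) = 1%nat -> (2 <= a (S (S m)))%nat ->
  LBP (Q (S m) + Q (S (S m))) (d m + d (S (S m))).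
Proof.
  intros Ha Ha'. set (c := S m).
  assert (HA : (A c = 1)%Z) by (unfold A, c; rewrite Ha; reflexivity).
  assert (HA' : (2 <= A (S c))%Z) by (unfold A, c; lia).
  pose proof (Qmono m). pose proof (Qrec' m) as HR. fold c in HR. rewrite HA in HR.
  try (repeat match goal with H : context [S m] |- _ => progress fold c in H end).
  apply (LB_reduce c); [unfold c; lia| lia|].
  intros x y Hq1 HqB Hnc Hs.
  pose proof (Qpos c ltac:(unfold c; lia)).
  pose proof (Q_nonneg a m).
  pose proof (dpos (S (S c))). pose proof (dpos (S c)). pose proof (delta_rec a alpha c) as Hdr.
  assert (HAr : 2 <= IZR (A (S c))) by (apply IZR_le; lia).
  replace (d m + d (S c)) with (IZR 1 * d c + IZR 2 * d (S c)).
  2:{ rewrite (delta_rec a alpha m). fold c. rewrite HA. simpl. ring. }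
  try (repeat match goal with H : context [S m] |- _ => progress fold c in H end).
  destruct (Z.eq_dec x 0) as [Hx|Hx].
  { subst x. pose proof (Q_nonneg a (S c)). assert (y >= 1)%Z by nia. destruct (Z.eq_dec y 1) as [Hy|Hy].
    - exfalso; exact (ex_Vc1 c 0 y Hq1 Hnc eq_refl Hy).
    - exfalso; nia. }
  destruct (Z.eq_dec y 0) as [Hy|Hy].
  { subst y. assert (x >= 1)%Z by nia. destruct (Z.eq_dec x 1) as [Hx1|Hx1].
    - exfalso; exact (ex_Vc c _ _ Hq1 Hnc Hx1 eq_refl).
    - Rprep; try (exfalso; lia). assert (x >= 2)%Z by nia.
      assert (2 <= IZR x) by (apply IZR_le; lia). simpl IZR.
      assert (2 * d (S c) < d c) by nra. nra. }
  pose proof (Q_nonneg a (S c)); destruct Hs as [[Hx1 Hy1]|[Hx1 Hy1]]; [assert (Hyneg : (y <= -1)%Z) by lia; assert (Hyy: (y * Q (S c) <= - Q (S c))%Z) by nia | assert (Hxneg : (x <= -1)%Z) by lia; assert (Hxx: (x * Q c <= - Q c)%Z) by nia].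
  - Rprep. assert (x >= 2)%Z by nia. fin.
  - Rprep. destruct (Z.eq_dec y 1) as [Hy2|Hy2].
    + exfalso. assert (x = -1)%Z by nia.
      apply (ex_Vprev m x y Hq1 Hnc); [fold c; lia| exact Hy2].
    + fin.
Qed.

End S3.

Section S4.
Variable a : nat -> nat.
Variable alpha : R.
Hypothesis Halpha : 0 < alpha < 1.
Hypothesis Hirr : irrational alpha.
Hypothesis Ha0 : a 0%nat = 0%nat.
Hypothesis Hapos : forall n : nat, (1 <= n)%nat -> (1 <= a n)%nat.
Hypothesis Hcf : Un_cv (fun n => INR (pn a n) / INR (qn a n)) alpha.

Notation Q := (Q a).
Notation P := (P a).
Notation A := (A a).
Notation d := (delta a alpha).
Notation NC := (NC a).
Notation val := (val alpha).
Notation LBP := (LBP a alpha).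

Lemma dpos' k : 0 < d k. Proof. eapply delta_pos; eauto. Qed.
Lemma ddec' k : d (S k) < d k. Proof. eapply delta_dec; eauto. Qed.
Lemma Apos' n : (1 <= n)%nat -> (1 <= A n)%Z. Proof. intros; eapply A_pos; eauto. Qed.
Lemma Qpos' k : (1 <= k)%nat -> (1 <= Q k)%Z. Proof. intros; eapply Q_pos; eauto. Qed.
Lemma Qmono' k : (Q k <= Q (S k))%Z. Proof. eapply Q_mono; eauto. Qed.

Lemma Qmono_gen i j : (i <= j)%nat -> (Q i <= Q j)%Z.
Proof.
  intros H. induction H; [lia|]. pose proof (Qmono' m). lia.
Qed.

Lemma NCrange m x y :
  (x <> 1 \/ y <> 0)%Z -> (x <> 0 \/ y <> 1)%Z ->
  (Q m < x * Q (S m) + y * Q (S (S m)))%Z ->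
  (x * Q (S m) + y * Q (S (S m)) < Q (S m) + Q (S (S m)))%Z ->
  NC (x * P (S m) + y * P (S (S m))) (x * Q (S m) + y * Q (S (S m))).
Proof.
  intros H1 H2 H3 H4 n [Hp Hq].
  change (Z.of_nat (pn a n)) with (P (S n)) in Hp.
  change (Z.of_nat (qn a n)) with (Q (S n)) in Hq.
  destruct (le_lt_dec (S n) m) as [Hl|Hl].
  { pose proof (Qmono_gen _ _ Hl). lia. }
  destruct (le_lt_dec (S n) (S (S m))) as [Hl2|Hl2].
  - assert (S n = S m \/ S n = S (S m)) as [He|He] by lia.
    + rewrite He in Hp, Hq.
      destruct (basis_zero a (S m) (x - 1) y); [lia|lia|lia].
    + rewrite He in Hp, Hq.
      destruct (basis_zero a (S m) x (y - 1)); [lia|lia|lia].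
  - assert (Q (S (S (S m))) <= Q (S n))%Z by (apply Qmono_gen; lia).
    rewrite Q_rec in H. pose proof (Apos' (S (S m)) ltac:(lia)).
    pose proof (Q_nonneg a (S (S m))). nia.
Qed.

Definition Rz (e : nat * R) : Prop :=
  exists p q : Z, NC p q /\ (1 <= q)%Z /\ q = Z.of_nat (fst e) /\ val p q = snd e.

Lemma Rz_A m : (3 <= a (S m))%nat -> Rz ((qs a m + qs a (S m))%nat, d m - d (S m)).
Proof.
  intros Ha. 
  assert (HA : (3 <= A (S m))%Z) by (unfold A; lia).
  pose proof (Qpos' (S m) ltac:(lia)). pose proof (Q_nonneg a m).
  pose proof (Q_rec a m) as HR.
  exists (P m + P (S m))%Z, (Q m + Q (S m))%Z. split; [|split; [|split]].
  - replace (P m + P (S m))%Z with ((1 - A (S m)) * P (S m) + 1 * P (S (S m)))%Z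
      by (rewrite P_rec; ring).
    replace (Q m + Q (S m))%Z with ((1 - A (S m)) * Q (S m) + 1 * Q (S (S m)))%Z
      by (rewrite Q_rec; ring).
    apply NCrange; [lia|lia|nia|nia].
  - lia.
  - cbn [fst]; unfold Q; lia.
  - unfold val. rewrite (value_formula a alpha m (P m + P (S m)) (Q m + Q (S m)) 1 1) by ring.
    pose proof (ddec' m). rewrite Rabs_right; [simpl; ring| simpl; lra].
Qed.

Lemma Rz_B n : (1 <= n)%nat -> Rz ((2 * qs a n)%nat, 2 * d n).
Proof.
  intros Hn. exists (2 * P n)%Z, (2 * Q n)%Z. split; [|split; [|split]].
  - intros j [Hp Hq].
    change (Z.of_nat (pn a j)) with (P (S j)) in Hp.
    change (Z.of_nat (qn a j)) with (Q (S j)) in Hq.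
    pose proof (det a (S j)). pose proof (sg_sq (S j)).
    rewrite <- Hp, <- Hq in H. nia.
  - pose proof (Qpos' n Hn). lia.
  - cbn [fst]; unfold Q; lia.
  - unfold val. rewrite (value_formula a alpha n (2 * P n) (2 * Q n) 2 0) by ring.
    pose proof (dpos' n). rewrite Rabs_right; [simpl; ring| simpl; lra].
Qed.

Lemma Rz_C m : (2 <= a (S m))%nat ->
  Rz ((qs a (S (S m)) - qs a (S m))%nat, d (S m) + d (S (S m))).
Proof.
  intros Ha. 
  assert (HA : (2 <= A (S m))%Z) by (unfold A; lia).
  pose proof (Qpos' (S m) ltac:(lia)). pose proof (Q_nonneg a m).
  pose proof (Q_rec a m) as HR.
  exists (-1 * P (S m) + 1 * P (S (S m)))%Z, (-1 * Q (S m) + 1 * Q (S (S m)))%Z. split; [|split; [|split]].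
  - apply NCrange; [lia|lia|nia|nia].
  - nia.
  - pose proof (Qmono' (S m)). cbn [fst]; unfold Q in *; lia.
  - unfold val. rewrite (value_formula a alpha (S m) _ _ (-1) 1) by ring.
    pose proof (dpos' (S m)). pose proof (dpos' (S (S m))).
    rewrite Rabs_left; [simpl; ring| simpl; lra].
Qed.

Lemma Rz_E m : a (S m) = 1%nat -> a m <> 1%nat ->
  Rz ((2 * qs a m + qs a (S m))%nat, d m + d (S (S m))).
Proof.
  intros Ha Hm. 
  assert (HA : (A (S m) = 1)%Z) by (unfold A; rewrite Ha; reflexivity).
  pose proof (Qpos' (S m) ltac:(lia)). pose proof (Q_nonneg a m).
  pose proof (Q_rec a m) as HR. rewrite HA in HR.
  assert (Hlt : (Q m < Q (S m))%Z).
  { destruct m as [|m'].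
    - rewrite Q0. lia.
    - rewrite Q_rec. assert (2 <= A (S m'))%Z.
      { pose proof (Hapos (S m') ltac:(lia)). unfold A. lia. }
      pose proof (Qpos' (S m') ltac:(lia)). pose proof (Q_nonneg a m'). nia. }
  exists (-1 * P (S m) + 2 * P (S (S m)))%Z, (-1 * Q (S m) + 2 * Q (S (S m)))%Z. split; [|split; [|split]].
  - apply NCrange; [lia|lia|nia|nia].
  - nia.
  -  cbn [fst]; unfold Q in *; lia.
  - unfold val. rewrite (value_formula a alpha (S m) _ _ (-1) 2) by ring.
    pose proof (dpos' (S m)). pose proof (dpos' (S (S m))).
    rewrite (delta_rec a alpha m).  rewrite HA.
    rewrite Rabs_left; [simpl; ring| simpl; lra].
Qed.

Lemma NCrange' m x y :
  (x <> 1 \/ y <> 0)%Z -> (x <> 0 \/ y <> 1)%Z ->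
  (Q m < x * Q (S m) + y * Q (S (S m)))%Z ->
  (x * Q (S m) + y * Q (S (S m)) < Q (S (S (S m))))%Z ->
  NC (x * P (S m) + y * P (S (S m))) (x * Q (S m) + y * Q (S (S m))).
Proof.
  intros H1 H2 H3 H4 n [Hp Hq].
  change (Z.of_nat (pn a n)) with (P (S n)) in Hp.
  change (Z.of_nat (qn a n)) with (Q (S n)) in Hq.
  destruct (le_lt_dec (S n) m) as [Hl|Hl].
  { pose proof (Qmono_gen _ _ Hl). lia. }
  destruct (le_lt_dec (S n) (S (S m))) as [Hl2|Hl2].
  - assert (S n = S m \/ S n = S (S m)) as [He|He] by lia.
    + rewrite He in Hp, Hq.
      destruct (basis_zero a (S m) (x - 1) y); [lia|lia|lia].
    + rewrite He in Hp, Hq.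
      destruct (basis_zero a (S m) x (y - 1)); [lia|lia|lia].
  - assert (Q (S (S (S m))) <= Q (S n))%Z by (apply Qmono_gen; lia). lia.
Qed.

Lemma Rz_E' m : a (S m) = 1%nat -> (2 <= a (S (S m)))%nat ->
  Rz ((2 * qs a m + qs a (S m))%nat, d m + d (S (S m))).
Proof.
  intros Ha Hm.
  assert (HA : (A (S m) = 1)%Z) by (unfold A; rewrite Ha; reflexivity).
  assert (HA2 : (2 <= A (S (S m)))%Z) by (unfold A; lia).
  pose proof (Qpos' (S m) ltac:(lia)). pose proof (Q_nonneg a m).
  pose proof (Q_rec a m) as HR. rewrite HA in HR.
  pose proof (Q_rec a (S m)) as HR2.
  exists (-1 * P (S m) + 2 * P (S (S m)))%Z, (-1 * Q (S m) + 2 * Q (S (S m)))%Z. split; [|split; [|split]].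
  - apply NCrange'; [lia|lia|nia|nia].
  - nia.
  - cbn [fst]; unfold Q in *; lia.
  - unfold val. rewrite (value_formula a alpha (S m) _ _ (-1) 2) by ring.
    pose proof (dpos' (S m)). pose proof (dpos' (S (S m))).
    rewrite (delta_rec a alpha m). rewrite HA.
    rewrite Rabs_left; [simpl; ring| simpl; lra].
Qed.

End S4.

Section S5.
Variable a : nat -> nat.
Variable alpha : R.
Hypothesis Halpha : 0 < alpha < 1.
Hypothesis Hirr : irrational alpha.
Hypothesis Ha0 : a 0%nat = 0%nat.
Hypothesis Hapos : forall n : nat, (1 <= n)%nat -> (1 <= a n)%nat.
Hypothesis Hcf : Un_cv (fun n => INR (pn a n) / INR (qn a n)) alpha.

Notation Q := (Q a).
Notation A := (A a).
Notation d := (delta a alpha).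
Notation LBP := (LBP a alpha).

Definition Rt (x y : nat * R) : Prop :=
  (fst x <= fst y)%nat /\ snd y < snd x /\ LBP (Z.of_nat (fst y)) (snd x).

Lemma dp k : 0 < d k. Proof. eapply delta_pos; eauto. Qed.
Lemma dd k : d (S k) < d k. Proof. eapply delta_dec; eauto. Qed.
Lemma Qm k : (Q k <= Q (S k))%Z. Proof. eapply Q_mono; eauto. Qed.
Lemma Qp k : (1 <= k)%nat -> (1 <= Q k)%Z. Proof. intros; eapply Q_pos; eauto. Qed.
Lemma Ar k : d k = IZR (A (S k)) * d (S k) + d (S (S k)). Proof. apply delta_rec. Qed.
Lemma Aeq k v : a k = v -> A k = Z.of_nat v. Proof. intros H; unfold A; rewrite H; reflexivity. Qed.
Lemma Age k v : (v <= a k)%nat -> (Z.of_nat v <= A k)%Z. Proof. intros H; unfold A; lia. Qed.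

Ltac qfacts m :=
  pose proof (Qm m); pose proof (Qm (S m)); pose proof (Qm (S (S m)));
  pose proof (Q_rec a m); pose proof (Q_rec a (S m)); pose proof (Qp (S m) ltac:(lia));
  pose proof (Q_nonneg a m);
  pose proof (dp m); pose proof (dp (S m)); pose proof (dp (S (S m))); pose proof (dp (S (S (S m))));
  pose proof (dd m); pose proof (dd (S m)); pose proof (dd (S (S m))).

Lemma T_W1 m : (3 <= a (S m))%nat ->
  Rt ((qs a m + qs a (S m))%nat, d m - d (S m)) ((2 * qs a (S m))%nat, 2 * d (S m)).
Proof.
  intros Ha. qfacts m. pose proof (Age _ _ Ha). pose proof (Ar m).
  assert (3 <= IZR (A (S m))) by (apply IZR_le; simpl in *; lia).
  split; [|split]; cbn [fst snd].
  - unfold Q in *. lia.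
  - nra.
  - replace (Z.of_nat (2 * qs a (S m))) with (2 * Q (S m))%Z by (unfold Q; lia).
    eapply W1; eauto.
Qed.

Lemma T_W2 m : (3 <= a (S m))%nat ->
  Rt ((2 * qs a (S m))%nat, 2 * d (S m)) ((qs a (S (S m)) - qs a (S m))%nat, d (S m) + d (S (S m))).
Proof.
  intros Ha. qfacts m. pose proof (Age _ _ Ha).
  split; [|split]; cbn [fst snd].
  - assert (3 * Q (S m) <= Q (S (S m)))%Z by nia. unfold Q in *. lia.
  - lra.
  - replace (Z.of_nat (qs a (S (S m)) - qs a (S m))) with (Q (S (S m)) - Q (S m))%Z by (unfold Q in *; lia).
    eapply W2; eauto.
Qed.

Lemma T_W3 m : a (S m) = 1%nat -> a (S (S m)) = 1%nat -> a m <> 1%nat ->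
  Rt ((2 * qs a m + qs a (S m))%nat, d m + d (S (S m))) ((2 * qs a (S m))%nat, 2 * d (S m)).
Proof.
  intros Ha Ha' Hm. qfacts m.
  pose proof (Aeq _ _ Ha) as HA. pose proof (Aeq _ _ Ha') as HA'.
  pose proof (Ar m) as R1. pose proof (Ar (S m)) as R2. rewrite HA in R1. rewrite HA' in R2.
  simpl in R1, R2.
  split; [|split]; cbn [fst snd].
  - assert (2 * Q m <= Q (S m))%Z.
    { destruct m as [|m'].
      - rewrite Q0. lia.
      - rewrite Q_rec. pose proof (Hapos (S m') ltac:(lia)).
        assert (2 <= A (S m'))%Z by (unfold A; lia). pose proof (Q_nonneg a m').
        pose proof (Q_nonneg a (S m')). nia. }
    unfold Q in *. lia.
  - lra.
  - replace (Z.of_nat (2 * qs a (S m))) with (2 * Q (S m))%Z by (unfold Q; lia).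
    eapply W3; eauto.
Qed.

Lemma T_W4 m : a (S m) = 1%nat -> a m = 1%nat -> a (S (S m)) <> 1%nat ->
  Rt ((2 * qs a (S m))%nat, 2 * d (S m)) ((2 * qs a m + qs a (S m))%nat, d m + d (S (S m))).
Proof.
  intros Ha Hm Ha'. qfacts m.
  pose proof (Aeq _ _ Ha) as HA.
  assert (HA' : (2 <= A (S (S m)))%Z).
  { pose proof (Hapos (S (S m)) ltac:(lia)). unfold A. lia. }
  assert (2 <= IZR (A (S (S m)))) by (apply IZR_le; lia).
  pose proof (Ar m) as R1. pose proof (Ar (S m)) as R2. rewrite HA in R1. simpl in R1.
  split; [|split]; cbn [fst snd].
  - destruct m as [|m']; [rewrite Ha0 in Hm; discriminate|].
    pose proof (Aeq _ _ Hm) as HAm. pose proof (Q_rec a m') as HR. rewrite HAm in HR.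
    pose proof (Qm m'). unfold Q in *. lia.
  - nra.
  - replace (Z.of_nat (2 * qs a m + qs a (S m))) with (2 * Q m + Q (S m))%Z by (unfold Q; lia).
    eapply W4; eauto.
Qed.

Lemma T_CA m : (2 <= a (S m))%nat -> (3 <= a (S (S m)))%nat ->
  Rt ((qs a (S (S m)) - qs a (S m))%nat, d (S m) + d (S (S m)))
     ((qs a (S m) + qs a (S (S m)))%nat, d (S m) - d (S (S m))).
Proof.
  intros Ha Ha'. qfacts m.
  split; [|split]; cbn [fst snd].
  - unfold Q in *. lia.
  - lra.
  - replace (Z.of_nat (qs a (S m) + qs a (S (S m)))) with (Q (S m) + Q (S (S m)))%Z by (unfold Q; lia).
    eapply G1; eauto; lia.
Qed.

Lemma T_CC m : (2 <= a (S m))%nat -> a (S (S m)) = 2%nat ->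
  Rt ((qs a (S (S m)) - qs a (S m))%nat, d (S m) + d (S (S m)))
     ((qs a (S (S (S m))) - qs a (S (S m)))%nat, d (S (S m)) + d (S (S (S m)))).
Proof.
  intros Ha Ha'. qfacts m. pose proof (Aeq _ _ Ha') as HA'. pose proof (Q_rec a (S m)) as HR.
  rewrite HA' in HR.
  split; [|split]; cbn [fst snd].
  - unfold Q in *. lia.
  - lra.
  - replace (Z.of_nat (qs a (S (S (S m))) - qs a (S (S m)))) with (Q (S m) + Q (S (S m)))%Z
      by (unfold Q in *; lia).
    eapply G1; eauto; lia.
Qed.

Lemma T_CE m : (2 <= a (S m))%nat -> a (S (S m)) = 1%nat ->
  Rt ((qs a (S (S m)) - qs a (S m))%nat, d (S m) + d (S (S m)))
     ((2 * qs a (S m) + qs a (S (S m)))%nat, d (S m) + d (S (S (S m)))).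
Proof.
  intros Ha Ha'. qfacts m.
  split; [|split]; cbn [fst snd].
  - unfold Q in *. lia.
  - lra.
  - replace (Z.of_nat (2 * qs a (S m) + qs a (S (S m)))) with (2 * Q (S m) + Q (S (S m)))%Z
      by (unfold Q; lia).
    eapply X3; eauto.
Qed.

Lemma T_EA m : a (S m) = 1%nat -> (3 <= a (S (S m)))%nat ->
  Rt ((2 * qs a m + qs a (S m))%nat, d m + d (S (S m)))
     ((qs a (S m) + qs a (S (S m)))%nat, d (S m) - d (S (S m))).
Proof.
  intros Ha Ha'. qfacts m. pose proof (Aeq _ _ Ha) as HA. rewrite HA in H2.
  split; [|split]; cbn [fst snd].
  - unfold Q in *. lia.
  - lra.
  - replace (Z.of_nat (qs a (S m) + qs a (S (S m)))) with (Q (S m) + Q (S (S m)))%Z by (unfold Q; lia).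
    eapply X4; eauto. lia.
Qed.

Lemma T_EC m : a (S m) = 1%nat -> a (S (S m)) = 2%nat ->
  Rt ((2 * qs a m + qs a (S m))%nat, d m + d (S (S m)))
     ((qs a (S (S (S m))) - qs a (S (S m)))%nat, d (S (S m)) + d (S (S (S m)))).
Proof.
  intros Ha Ha'. qfacts m. pose proof (Aeq _ _ Ha) as HA. rewrite HA in H2.
  pose proof (Aeq _ _ Ha') as HA'. pose proof (Q_rec a (S m)) as HR. rewrite HA' in HR.
  split; [|split]; cbn [fst snd].
  - unfold Q in *. lia.
  - lra.
  - replace (Z.of_nat (qs a (S (S (S m))) - qs a (S (S m)))) with (Q (S m) + Q (S (S m)))%Z
      by (unfold Q in *; lia).
    eapply X4; eauto. lia.
Qed.

Lemma T_BB m : a (S m) = 1%nat -> a (S (S m)) = 1%nat ->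
  Rt ((2 * qs a (S m))%nat, 2 * d (S m)) ((2 * qs a (S (S m)))%nat, 2 * d (S (S m))).
Proof.
  intros Ha Ha'. qfacts m.
  split; [|split]; cbn [fst snd].
  - unfold Q in *. lia.
  - lra.
  - replace (Z.of_nat (2 * qs a (S (S m)))) with (2 * Q (S (S m)))%Z by (unfold Q; lia).
    eapply W5; eauto.
Qed.

End S5.

Fixpoint chainR {T} (R : T -> T -> Prop) (l : list T) : Prop :=
  match l with
  | x :: ((y :: _) as l') => R x y /\ chainR R l'
  | _ => True
  end.

Lemma chain_nth {T} (R : T -> T -> Prop) l i dflt :
  chainR R l -> (S i < length l)%nat -> R (nth i l dflt) (nth (S i) l dflt).
Proof.
  revert i. induction l as [|x l IH]; intros i H Hl; simpl in Hl; [lia|].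
  destruct l as [|y l']; simpl in Hl; [lia|].
  destruct H as [H1 H2]. destruct i.
  - exact H1.
  - change (nth (S i) (x :: y :: l') dflt) with (nth i (y :: l') dflt).
    change (nth (S (S i)) (x :: y :: l') dflt) with (nth (S i) (y :: l') dflt).
    apply IH; [exact H2| simpl; lia].
Qed.

Lemma chain_app {T} (R : T -> T -> Prop) l1 l2 dflt :
  chainR R l1 -> chainR R l2 -> (l1 <> [] -> l2 <> [] -> R (last l1 dflt) (hd dflt l2)) ->
  chainR R (l1 ++ l2).
Proof.
  induction l1 as [|x l IH]; intros H1 H2 H3; [exact H2|].
  destruct l as [|y l'].
  - simpl. destruct l2 as [|z l2']; [exact I|]. split; [|exact H2].
    apply H3; discriminate.
  - destruct H1 as [Ha Hb]. simpl. split; [exact Ha|].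
    apply IH; [exact Hb|exact H2|]. intros _ Hn. specialize (H3 ltac:(discriminate) Hn).
    exact H3.
Qed.

Lemma last_app' {T} (l1 l2 : list T) dflt : l2 <> [] -> last (l1 ++ l2) dflt = last l2 dflt.
Proof.
  intros H. induction l1 as [|x l IH]; [reflexivity|].
  destruct l as [|y l'].
  - simpl. destruct l2; [contradiction|reflexivity].
  - rewrite <- IH. reflexivity.
Qed.

Section S6.
Variable a : nat -> nat.
Variable alpha : R.
Hypothesis Halpha : 0 < alpha < 1.
Hypothesis Hirr : irrational alpha.
Hypothesis Ha0 : a 0%nat = 0%nat.
Hypothesis Hapos : forall n : nat, (1 <= n)%nat -> (1 <= a n)%nat.
Hypothesis Hcf : Un_cv (fun n => INR (pn a n) / INR (qn a n)) alpha.

Notation d := (delta a alpha).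
Notation Rt := (Rt a alpha).
Notation Rz := (Rz a alpha).

Definition blockW (n : nat) : list (nat * R) :=
  if (3 <=? a n)%nat then
    [ ((qs a (n - 1) + qs a n)%nat, d (n - 1) - d n) ; ((2 * qs a n)%nat, 2 * d n) ;
      ((qs a (S n) - qs a n)%nat, d n + d (S n)) ]
  else if (a n =? 2)%nat then [ ((qs a (S n) - qs a n)%nat, d n + d (S n)) ]
  else
    match negb (a (n - 1) =? 1)%nat, negb (a (S n) =? 1)%nat with
    | true, true   => [ ((2 * qs a (n - 1) + qs a n)%nat, d (n - 1) + d (S n)) ]
    | true, false  => [ ((2 * qs a (n - 1) + qs a n)%nat, d (n - 1) + d (S n)) ;
                        ((2 * qs a n)%nat, 2 * d n) ]
    | false, false => [ ((2 * qs a n)%nat, 2 * d n) ]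
    | false, true  => [ ((2 * qs a n)%nat, 2 * d n) ;
                        ((2 * qs a (n - 1) + qs a n)%nat, d (n - 1) + d (S n)) ]
    end.

Lemma blockW_fst n : map fst (blockW n) = block a n.
Proof.
  unfold blockW, block.
  destruct (3 <=? a n); [reflexivity|].
  destruct (a n =? 2); [reflexivity|].
  destruct (negb (a (n - 1) =? 1)), (negb (a (S n) =? 1)); reflexivity.
Qed.

Lemma blockW_nonnil n : blockW n <> [].
Proof.
  unfold blockW.
  destruct (3 <=? a n); [discriminate|].
  destruct (a n =? 2); [discriminate|].
  destruct (negb (a (n - 1) =? 1)), (negb (a (S n) =? 1)); discriminate.
Qed.

Ltac bconv := repeat match goal with
 | H : (_ <=? _) = true |- _ => apply Nat.leb_le in H
 | H : (_ <=? _) = false |- _ => apply Nat.leb_gt in H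
 | H : (_ =? _) = true |- _ => apply Nat.eqb_eq in H
 | H : (_ =? _) = false |- _ => apply Nat.eqb_neq in H
 | H : negb _ = true |- _ => apply Bool.negb_true_iff in H
 | H : negb _ = false |- _ => apply Bool.negb_false_iff in H
 end.

Lemma blockW_Rz n : (1 <= n)%nat -> Forall Rz (blockW n).
Proof.
  intros Hn. destruct n as [|m]; [lia|].
  pose proof (Hapos (S m) ltac:(lia)).
  unfold blockW. replace (S m - 1)%nat with m by lia.
  destruct (3 <=? a (S m)) eqn:E1.
  { bconv. repeat constructor.
    - eapply Rz_A; eauto.
    - eapply Rz_B; eauto; lia.
    - eapply Rz_C; eauto; lia. }
  destruct (a (S m) =? 2) eqn:E2.
  { bconv. repeat constructor. eapply Rz_C; eauto; lia. }
  bconv. assert (a (S m) = 1%nat) by lia.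
  destruct (negb (a m =? 1)) eqn:E3, (negb (a (S (S m)) =? 1)) eqn:E4; bconv;
    repeat constructor;
    first [ solve [eapply Rz_E; eauto] | solve [eapply Rz_E'; eauto; pose proof (Hapos (S (S m))); lia] | solve [eapply Rz_B; eauto; lia] ].
Qed.

Lemma blockW_ge n : (1 <= n)%nat -> Forall (fun e => (qs a n <= fst e)%nat) (blockW n).
Proof.
  intros Hn. destruct n as [|m]; [lia|].
  pose proof (Hapos (S m) ltac:(lia)).
  assert (HR : qs a (S (S m)) = (a (S m) * qs a (S m) + qs a m)%nat) by reflexivity.
  unfold blockW. replace (S m - 1)%nat with m by lia.
  apply Forall_forall. intros e He.
  destruct (3 <=? a (S m)) eqn:E1.
  { bconv. repeat (destruct He as [<-|He]; [cbn [fst]; nia|]); contradiction. }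
  destruct (a (S m) =? 2) eqn:E2.
  { bconv. repeat (destruct He as [<-|He]; [cbn [fst]; nia|]); contradiction. }
  destruct (negb (a m =? 1)), (negb (a (S (S m)) =? 1)); repeat (destruct He as [<-|He]; [cbn [fst]; lia|]); contradiction.
Qed.

Lemma blockW_chain n : (1 <= n)%nat -> chainR Rt (blockW n).
Proof.
  intros Hn. destruct n as [|m]; [lia|].
  pose proof (Hapos (S m) ltac:(lia)).
  unfold blockW. replace (S m - 1)%nat with m by lia.
  destruct (3 <=? a (S m)) eqn:E1.
  { bconv. simpl. split; [eapply T_W1; eauto|split; [eapply T_W2; eauto| exact I]]. }
  destruct (a (S m) =? 2) eqn:E2.
  { simpl. exact I. }
  bconv. assert (a (S m) = 1%nat) by lia.
  destruct (negb (a m =? 1)) eqn:E3, (negb (a (S (S m)) =? 1)) eqn:E4; bconv; simpl;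
    try exact I.
  - split; [|exact I]. eapply T_W3; eauto.
  - split; [|exact I]. eapply T_W4; eauto.
Qed.

Lemma blockW_bound n : (1 <= n)%nat ->
  Rt (last (blockW n) (0%nat, 0)) (hd (0%nat, 0) (blockW (S n))).
Proof.
  intros Hn. destruct n as [|m]; [lia|].
  pose proof (Hapos (S m) ltac:(lia)). pose proof (Hapos (S (S m)) ltac:(lia)).
  unfold blockW. replace (S m - 1)%nat with m by lia. replace (S (S m) - 1)%nat with (S m) by lia.
  destruct (3 <=? a (S m)) eqn:E1;
  [|destruct (a (S m) =? 2) eqn:E2;
    [|destruct (negb (a m =? 1)) eqn:E3, (negb (a (S (S m)) =? 1)) eqn:E4]];
  (destruct (3 <=? a (S (S m))) eqn:F1;
  [|destruct (a (S (S m)) =? 2) eqn:F2;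
    [|destruct (negb (a (S m) =? 1)) eqn:F3, (negb (a (S (S (S m))) =? 1)) eqn:F4]]);
  bconv; simpl last; simpl hd; try (exfalso; lia);
  first
  [ solve [eapply T_CA; eauto; lia]
  | solve [eapply T_CC; eauto; lia]
  | solve [eapply T_CE; eauto; lia]
  | solve [eapply T_EA; eauto; lia]
  | solve [eapply T_EC; eauto; lia]
  | solve [eapply T_BB; eauto; lia] ].
Qed.

End S6.

Lemma map_flat_map' {A B C} (f : B -> C) (g : A -> list B) l :
  map f (flat_map g l) = flat_map (fun x => map f (g x)) l.
Proof. induction l; simpl; [reflexivity|]. rewrite map_app, IHl. reflexivity. Qed.

Section S7.
Variable a : nat -> nat.
Variable alpha : R.
Hypothesis Halpha : 0 < alpha < 1.
Hypothesis Hirr : irrational alpha.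
Hypothesis Ha0 : a 0%nat = 0%nat.
Hypothesis Hapos : forall n : nat, (1 <= n)%nat -> (1 <= a n)%nat.
Hypothesis Hcf : Un_cv (fun n => INR (pn a n) / INR (qn a n)) alpha.

Notation bW := (blockW a alpha).
Notation Rt := (Rt a alpha).
Notation Rz := (Rz a alpha).
Definition dflt : nat * R := (0%nat, 0).

Definition L (N : nat) := flat_map bW (seq 1 N).

Lemma L_S N : L (S N) = L N ++ bW (S N).
Proof. unfold L. rewrite seq_S, flat_map_app. simpl. rewrite app_nil_r. reflexivity. Qed.

Lemma len_L N : (N <= length (L N))%nat.
Proof.
  induction N; [simpl; lia|]. rewrite L_S, length_app.
  pose proof (blockW_nonnil a alpha (S N)). destruct (bW (S N)); [contradiction|simpl; lia].
Qed.

Lemma L_prefix N M : (N <= M)%nat -> exists r, L M = L N ++ r.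
Proof.
  intros H. induction H.
  - exists []. rewrite app_nil_r. reflexivity.
  - destruct IHle as [r Hr]. exists (r ++ bW (S m)). rewrite L_S, Hr, app_assoc. reflexivity.
Qed.

Definition ent k := nth k (L (S k)) dflt.

Lemma ent_stable k N : (S k <= N)%nat -> nth k (L N) dflt = ent k.
Proof.
  intros H. destruct (L_prefix _ _ H) as [r Hr]. rewrite Hr. unfold ent.
  apply app_nth1. pose proof (len_L (S k)). lia.
Qed.

Lemma chain_L N : chainR Rt (L N) /\ ((1 <= N)%nat -> last (L N) dflt = last (bW N) dflt).
Proof.
  induction N.
  - split; [exact I| intros; lia].
  - destruct IHN as [H1 H2]. rewrite L_S. split.
    + apply (chain_app _ _ _ dflt); [exact H1| eapply blockW_chain; eauto; lia|].
      intros Hne _. destruct N.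
      * contradiction.
      * rewrite H2 by lia. eapply blockW_bound; eauto; lia.
    + intros _. apply (last_app' _ _ dflt). apply blockW_nonnil.
Qed.

Lemma Rt_ent k : Rt (ent k) (ent (S k)).
Proof.
  rewrite <- (ent_stable k (S (S k))) by lia.
  rewrite <- (ent_stable (S k) (S (S k))) by lia.
  apply chain_nth; [apply chain_L|]. pose proof (len_L (S (S k))). lia.
Qed.

Lemma Rz_ent k : Rz (ent k).
Proof.
  unfold ent. assert (Hin : In (nth k (L (S k)) dflt) (L (S k))).
  { apply nth_In. pose proof (len_L (S k)). lia. }
  unfold L in Hin. apply in_flat_map in Hin. destruct Hin as [n [Hn He]].
  apply in_seq in Hn.
  assert (HF : Forall Rz (bW n)) by (eapply blockW_Rz; eauto; lia).
  rewrite Forall_forall in HF. exact (HF _ He).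
Qed.

Lemma Qseq_ent k : Qseq a k = fst (ent k).
Proof.
  unfold Qseq, ent.
  assert (flat_map (block a) (seq 1 (S k)) = map fst (L (S k))).
  { unfold L. rewrite map_flat_map'. apply flat_map_ext. intros. symmetry. apply blockW_fst. }
  rewrite H. apply (map_nth fst (L (S k)) dflt k).
Qed.

Lemma ent0 : fst (ent 0) = 1%nat.
Proof.
  unfold ent, L. simpl seq. simpl flat_map. rewrite app_nil_r.
  pose proof (Hapos 1 ltac:(lia)).
  unfold blockW. simpl (1 - 1)%nat. rewrite Ha0.
  destruct (3 <=? a 1) eqn:E1; [reflexivity|].
  destruct (a 1 =? 2) eqn:E2.
  - apply Nat.eqb_eq in E2. cbn [nth fst]. simpl qs. rewrite E2. reflexivity.
  - simpl negb. destruct (negb (a 2 =? 1)); reflexivity.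
Qed.

Lemma unbounded t : exists k, (t < fst (ent k))%nat.
Proof.
  set (N := S t). exists (length (L N)).
  set (k := length (L N)).
  assert (HkN : (N <= k)%nat) by apply len_L.
  unfold ent. destruct (L_prefix (S N) (S k) ltac:(lia)) as [r Hr].
  rewrite Hr, L_S, <- app_assoc. rewrite app_nth2 by lia. unfold k. rewrite Nat.sub_diag.
  pose proof (blockW_nonnil a alpha (S N)).
  assert (HF : Forall (fun e => (qs a (S N) <= fst e)%nat) (bW (S N))) by (eapply blockW_ge; eauto; lia).
  destruct (bW (S N)) as [|e l] eqn:Eb; [contradiction|].
  simpl nth. inversion HF; subst.
  pose proof (Q_lin a Ha0 Hapos (S N)). unfold Q in H0. unfold N in *. lia.
Qed.

End S7.

Section S8.
Variable a : nat -> nat.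
Variable alpha : R.
Hypothesis Halpha : 0 < alpha < 1.
Hypothesis Hirr : irrational alpha.
Hypothesis Ha0 : a 0%nat = 0%nat.
Hypothesis Hapos : forall n : nat, (1 <= n)%nat -> (1 <= a n)%nat.
Hypothesis Hcf : Un_cv (fun n => INR (pn a n) / INR (qn a n)) alpha.

Definition ff k := fst (ent a alpha k).
Definition ww k := snd (ent a alpha k).

Lemma Rt_e k : Rt a alpha (ent a alpha k) (ent a alpha (S k)).
Proof. eapply Rt_ent; eauto. Qed.

Lemma ff_mono i j : (i <= j)%nat -> (ff i <= ff j)%nat.
Proof.
  intros H. induction H; [lia|]. destruct (Rt_e m) as [H1 _]. unfold ff in *. lia.
Qed.

Lemma ww_mono i j : (i < j)%nat -> ww j < ww i.
Proof.
  intros H. induction H.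
  - destruct (Rt_e i) as [_ [H1 _]]. exact H1.
  - destruct (Rt_e m) as [_ [H1 _]]. unfold ww in *. lra.
Qed.

Lemma ff0 : ff 0 = 1%nat. Proof. unfold ff. eapply ent0; eauto. Qed.

Lemma findK t : (1 <= t)%nat -> exists k, (ff k <= t < ff (S k))%nat.
Proof.
  intros Ht. assert (exists k0, (t < ff k0)%nat) as [k0 Hk0].
  { unfold ff. eapply unbounded; eauto. }
  induction k0.
  + rewrite ff0 in Hk0. lia.
  + destruct (le_lt_dec (ff k0) t).
    * exists k0. lia.
    * apply IHk0. exact l.
Qed.

Lemma psi2_at t k : (ff k <= t < ff (S k))%nat -> psi2 alpha a t (ww k).
Proof.
  intros Hk. split.
  - assert (HR : Rz a alpha (ent a alpha k)) by (eapply Rz_ent; eauto).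
    destruct HR as (p & q & Hnc & Hq1 & Hq & Hv).
    exists p, q. split.
    + split; [exact Hq1|split; [|exact Hnc]]. unfold ff in Hk. lia.
    + unfold ww. rewrite <- Hv. reflexivity.
  - intros p q (Hq1 & Hqt & Hnc).
    destruct (Rt_e k) as [_ [_ HL]].
    apply HL; [exact Hnc|exact Hq1|]. unfold ff in Hk. lia.
Qed.

Lemma psi2_unique t v v' : psi2 alpha a t v -> psi2 alpha a t v' -> v = v'.
Proof.
  intros [[p [q [Ha Hv]]] Hm] [[p' [q' [Ha' Hv']]] Hm'].
  apply Rle_antisym.
  - rewrite Hv'. apply Hm. exact Ha'.
  - rewrite Hv. apply Hm'. exact Ha.
Qed.

Lemma main_sec :
  (forall j k : nat, (j < k)%nat ->
     (forall i : nat, (i < k)%nat -> Qseq a i <> Qseq a k) ->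
     (Qseq a j < Qseq a k)%nat) /\ (forall m : nat, inQ alpha a m <-> exists k : nat, Qseq a k = m).
Proof.
  assert (HQ : forall k, Qseq a k = ff k) by (intros; unfold ff; apply Qseq_ent).
  split.
  - intros j k Hjk Hne. rewrite !HQ. specialize (Hne (k - 1)%nat ltac:(lia)). rewrite !HQ in Hne.
    pose proof (ff_mono j (k - 1) ltac:(lia)). pose proof (ff_mono (k - 1) k ltac:(lia)). lia.
  - intros m. split.
    + intros [Hm1|[Hm2 (v & w & Hv & Hw & Hvw)]].
      * exists 0%nat. rewrite HQ, ff0. auto.
      * destruct (findK m ltac:(lia)) as [k1 Hk1].
        destruct (findK (m - 1) ltac:(lia)) as [k2 Hk2].
        pose proof (psi2_unique _ _ _ Hv (psi2_at _ _ Hk1)).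
        pose proof (psi2_unique _ _ _ Hw (psi2_at _ _ Hk2)). subst v w.
        assert (k2 < k1)%nat.
        { destruct (le_lt_dec k1 k2); [|exact l].
          destruct (le_lt_eq_dec _ _ l) as [l'|l'].
          - pose proof (ww_mono _ _ l'). lra.
          - subst. lra. }
        pose proof (ff_mono (S k2) k1 ltac:(lia)).
        exists k1. rewrite HQ. lia.
    + intros [k Hk]. rewrite HQ in Hk.
      pose proof (ff_mono 0 k ltac:(lia)). rewrite ff0 in H.
      destruct (Nat.eq_dec m 1) as [->|Hm1]; [left; reflexivity|right].
      split; [lia|].
      destruct (findK m ltac:(lia)) as [k1 Hk1].
      destruct (findK (m - 1) ltac:(lia)) as [k2 Hk2].
      exists (ww k1), (ww k2). split; [apply psi2_at; exact Hk1|].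
      split; [apply psi2_at; exact Hk2|].
      apply ww_mono.
      assert (k <= k1)%nat.
      { destruct (le_lt_dec k k1); [exact l|]. pose proof (ff_mono (S k1) k ltac:(lia)). lia. }
      assert (k2 < k)%nat.
      { destruct (le_lt_dec k k2); [|exact l]. pose proof (ff_mono k k2 l). lia. }
      lia.
Qed.

End S8.

Theorem mainTheorem1 (alpha : R) (a : nat -> nat)
  (Halpha : 0 < alpha < 1) (Hirr : irrational alpha)
  (Ha0 : a 0%nat = 0%nat)
  (Hapos : forall n : nat, (1 <= n)%nat -> (1 <= a n)%nat)
  (Hcf : Un_cv (fun n => INR (pn a n) / INR (qn a n)) alpha) :
  (forall j k : nat, (j < k)%nat ->
     (forall i : nat, (i < k)%nat -> Qseq a i <> Qseq a k) ->
     (Qseq a j < Qseq a k)%nat) /\ (forall m : nat, inQ alpha a m <-> exists k : nat, Qseq a k = m).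
Proof.
  eapply main_sec; eauto.
Qed.
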